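(* Let $\lambda=(\lambda_1,\ldots,\lambda_n)\in\mathbb{R}_{<0}^n$ have pairwise distinct entries. Then $\nu_{k,\lambda}(t)\ge 0$ for all $t\ge 0$ and all $k=0,\ldots,n-1$.
   Context: $V_\lambda$ is the $n\times n$ Vandermonde matrix with $(i,j)$ entry $\lambda_j^{i-1}$, and the Vandermonde basis functions are defined by $[\nu_{0,\lambda}(t),\ldots,\nu_{n-1,\lambda}(t)]=[e^{\lambda_1 t},\ldots,e^{\lambda_n t}]V_\lambda^{-1}$. *)

(* Defs.v *)
From mathcomp Require Import all_boot all_order all_algebra.
From mathcomp Require Import all_classical all_reals all_analysis.
Set Implicit Arguments. Unset Strict Implicit. Unset Printing Implicit Defensive.
Import Order.TTheory GRing.Theory Num.Theory.
Local Open Scope ring_scope.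

(* V_lambda : the n x n Vandermonde matrix, entry (i,j) = lambda_j ^ i
   (0-indexed rows, i.e. lambda_j^(i-1) with 1-indexed rows): MathComp's
   [Vandermonde n lam] is exactly \matrix_(i, j) lam 0 j ^+ i. *)
Definition vander_mx (R : realType) (n : nat) (lam : 'rV[R]_n) : 'M[R]_n :=
  Vandermonde n lam.

Definition vbasis (R : realType) (n : nat) (lam : 'rV[R]_n) (t : R) : 'rV[R]_n :=
  (\row_j expR (lam 0 j * t)) *m invmx (vander_mx lam).

Definition nu (R : realType) (n : nat) (k : 'I_n) (lam : 'rV[R]_n) (t : R) : R :=
  vbasis lam t 0 k.

(* Main.v *)
Require Import Defs.
From mathcomp Require Import all_boot all_order all_algebra.
From mathcomp Require Import all_classical all_reals all_analysis.
Import Order.TTheory GRing.Theory Num.Theory.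
From mathcomp Require Import ring.
Local Open Scope ring_scope.

Lemma dexp (R : realType) (w c x : R) :
  is_derive x 1 (fun t => w * expR (c * t)) (w * (c * expR (c * x))).
Proof.
have h1 : is_derive x 1 ( *%R c) c.
  by apply: is_derive_eq; rewrite /GRing.scale/= mulr1.
have h2 : is_derive x 1 (fun t => expR (c * t)) (expR (c * x) * c).
  exact: (is_derive1_comp (f := expR) (g := *%R c)).
have h3 := is_deriveZ w h2.
apply: is_derive_eq; rewrite /GRing.scale/=.
by congr (_ * _); rewrite mulrC.
Qed.

Lemma mulV_E (R : realType) n (lam c : 'rV[R]_n) j :
  (c *m vander_mx lam) 0 j = \sum_(k < n) c 0 k * lam 0 j ^+ k.
Proof. rewrite !mxE; apply: eq_bigr => k _; by rewrite /vander_mx /Vandermonde mxE. Qed.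

Definition rpoly (R : realType) n (c : 'rV[R]_n) : {poly R} := \sum_(k < n) c 0 k *: 'X^k.
Arguments rpoly {R n} c.

Lemma rpoly_horner (R : realType) n (c : 'rV[R]_n) (x : R) :
  (rpoly c).[x] = \sum_(k < n) c 0 k * x ^+ k.
Proof. rewrite /rpoly horner_sum; apply: eq_bigr => k _; by rewrite hornerZ hornerXn. Qed.

Lemma coef_rpoly_ord (R : realType) n (c : 'rV[R]_n) (k : 'I_n) : (rpoly c)`_k = c 0 k.
Proof.
rewrite /rpoly coef_sum (bigD1 k) //= coefZ coefXn eqxx mulr1 big1 ?addr0 // => j jk.
rewrite coefZ coefXn; case: eqP => [E|]; last by rewrite mulr0.
by move: jk; rewrite (_ : j = k) ?eqxx //; apply: val_inj.
Qed.

Lemma coef_rpoly_ge (R : realType) n (c : 'rV[R]_n) i : (n <= i)%N -> (rpoly c)`_i = 0.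
Proof.
move=> ni; rewrite /rpoly coef_sum big1 // => k _; rewrite coefZ coefXn.
case: eqP => [E|]; last by rewrite mulr0.
by move: (ltn_ord k); rewrite -E ltnNge ni.
Qed.

Lemma size_rpoly (R : realType) n (c : 'rV[R]_n) : (size (rpoly c) <= n)%N.
Proof. by apply/leq_sizeP => j; apply: coef_rpoly_ge. Qed.

Lemma vander_unit (R : realType) n (lam : 'rV[R]_n) :
  (forall i j : 'I_n, i != j -> lam 0 i != lam 0 j) -> vander_mx lam \in unitmx.
Proof.
move=> H; rewrite unitmxE unitfE /vander_mx det_Vandermonde.
apply/prodf_neq0 => i _; apply/prodf_neq0 => j ij; rewrite subr_eq0.
apply: H; apply/eqP => E; by move: ij; rewrite E ltnn.
Qed.

Lemma interp_unique (R : realType) n (lam y : 'rV[R]_n) (q : {poly R}) :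
  vander_mx lam \in unitmx -> (size q <= n)%N ->
  (forall j, q.[lam 0 j] = y 0 j) ->
  forall k : 'I_n, q`_k = (y *m invmx (vander_mx lam)) 0 k.
Proof.
move=> U sq H k.
have -> : y = (\row_k q`_k) *m vander_mx lam.
  apply/rowP => j; rewrite mulV_E -H (horner_coef_wide _ sq).
  by apply: eq_bigr => i _; rewrite mxE.
by rewrite mulmxK // mxE.
Qed.

Lemma nu_interp (R : realType) n (lam : 'rV[R]_n) t :
  vander_mx lam \in unitmx ->
  forall j, (rpoly (Defs.vbasis lam t)).[lam 0 j] = expR (lam 0 j * t).
Proof. by move=> U j; rewrite rpoly_horner -mulV_E /Defs.vbasis mulmxKV // mxE. Qed.
Arguments vander_unit {R n lam}.
Arguments interp_unique {R n lam y q}.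
Arguments nu_interp {R n lam}.
Arguments coef_rpoly_ord {R n}.
Arguments coef_rpoly_ge {R n}.
Arguments size_rpoly {R n}.

Lemma top_ge0 (R : realType) n : forall lam : 'rV[R]_n.+1,
  (forall i j : 'I_n.+1, i != j -> lam 0 i != lam 0 j) ->
  forall t : R, 0 <= t -> 0 <= nu ord_max lam t.
Proof.
elim: n => [|n IH] lam D t t0.
  have U := vander_unit D.
  have := interp_unique U (size_polyC_leq1 (expR (lam 0 0 * t)))
     (y := \row_j expR (lam 0 j * t)) _ ord_max.
  rewrite /nu /Defs.vbasis => <-; first by rewrite coefC /= expR_ge0.
  by move=> j; rewrite hornerC mxE (ord1 j).
pose lam' := \row_(j < n.+1) lam 0 (lift ord_max j).
have D' : forall i j : 'I_n.+1, i != j -> lam' 0 i != lam' 0 j.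
  by move=> i j ij; rewrite !mxE; apply: D; rewrite (inj_eq (@lift_inj _ _)).
pose l := lam 0 ord_max.
pose W := invmx (vander_mx lam).
have U := vander_unit D.
have U' := vander_unit D'.
have Fdef : forall s, nu ord_max lam s = \sum_j expR (lam 0 j * s) * W j ord_max.
  by move=> s; rewrite /nu /Defs.vbasis !mxE; apply: eq_bigr => j _; rewrite mxE.
have Iden : forall s, \sum_j (lam 0 j - l) * expR (lam 0 j * s) * W j ord_max
    = nu ord_max lam' s.
  move=> s.
  have := interp_unique U (q := ('X - l%:P) * rpoly (Defs.vbasis lam' s))
     (y := \row_j ((lam 0 j - l) * expR (lam 0 j * s))) _ _ ord_max.
  have -> : (('X - l%:P) * rpoly (Defs.vbasis lam' s))`_(@ord_max n.+1) = nu ord_max lam' s.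
    rewrite mulrBl coefB coefXM coefCM /=.
    rewrite [X in _ - l * X]coef_rpoly_ge // mulr0 subr0.
    exact: (coef_rpoly_ord (Defs.vbasis lam' s) ord_max).
  move=> ->.
  - by rewrite !mxE; apply: eq_bigr => j _; rewrite mxE.
  - apply: leq_trans (size_polyMleq _ _) _.
    by rewrite size_XsubC add2n /= ltnS size_rpoly.
  - move=> j; rewrite hornerM hornerXsubC mxE.
    case: (unliftP ord_max j) => [j'|] ->.
      by have := nu_interp s U' j'; rewrite mxE => ->.
    by rewrite /l subrr !mul0r.
pose g := fun s => \sum_j W j ord_max * expR ((lam 0 j - l) * s).
have Fg : forall s, nu ord_max lam s = expR (l * s) * g s.
  move=> s; rewrite Fdef /g mulr_sumr; apply: eq_bigr => j _.
  rewrite mulrCA -expRD mulrC; congr (_ * _); congr expR.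
  by rewrite mulrBl addrC subrK.
have dg : forall x : R, is_derive x (1 : R) g
    (\sum_j W j ord_max * ((lam 0 j - l) * expR ((lam 0 j - l) * x))).
  move=> x.
  rewrite (_ : g = \sum_j (fun s => W j ord_max * expR ((lam 0 j - l) * s))); last first.
    by rewrite fct_sumE.
  by apply: is_derive_sum => j; exact: dexp.
have dgE : forall x, \sum_j W j ord_max * ((lam 0 j - l) * expR ((lam 0 j - l) * x))
    = expR (- (l * x)) * nu ord_max lam' x.
  move=> x; rewrite -Iden mulr_sumr; apply: eq_bigr => j _.
  rewrite [(lam 0 j - l) * x]mulrBl expRD; ring.
have g0 : g 0 = 0.
  have := Fg 0; rewrite mulr0 expR0 mul1r => <-.
  have := interp_unique U (q := 1) (y := \row_j expR (lam 0 j * 0)) _ _ ord_max.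
  rewrite /nu /Defs.vbasis => <-; first by rewrite coef1.
  - by rewrite size_poly1.
  - by move=> j; rewrite hornerC mxE mulr0 expR0.
have gpos : 0 <= g t.
  move: t0; rewrite le_eqVlt => /orP [/eqP <-|tp]; first by rewrite g0.
  have [c cI E] := MVT tp (fun x _ => dg x)
    (derivable_within_continuous (fun x _ => ex_derive (is_derive := dg x))).
  move: E; rewrite g0 subr0 subr0 => ->.
  apply: mulr_ge0; last exact: ltW.
  rewrite dgE; apply: mulr_ge0; first exact: expR_ge0.
  apply: IH => //.
  by move: cI; rewrite in_itv /= => /andP [/ltW].
by rewrite Fg; apply: mulr_ge0 => //; exact: expR_ge0.
Qed.

Lemma prod_coef_ge0 (R : realType) n (c : 'I_n -> R) :
  (forall j, c j < 0) -> forall i, 0 <= (\prod_(j < n) ('X - (c j)%:P))`_i.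
Proof.
move=> neg.
apply: (big_ind (fun p : {poly R} => forall i, 0 <= p`_i)).
- by move=> i; rewrite coef1 ler0n.
- move=> p q hp hq i; rewrite coefM; apply: sumr_ge0 => j _; exact: mulr_ge0.
- move=> j _ [|[|i]]; rewrite coefB coefX coefC /=.
  + by rewrite sub0r oppr_ge0 ltW.
  + by rewrite subr0 ler01.
  + by rewrite subr0.
Qed.

Theorem proposition6 (R : realType) (n : nat) (lam : 'rV[R]_n) :
  (forall j : 'I_n, lam 0 j < 0) ->
  (forall i j : 'I_n, i != j -> lam 0 i != lam 0 j) ->
  forall (k : 'I_n) (t : R), 0 <= t -> 0 <= nu k lam t.
Proof.
move=> neg D k t t0.
elim: n lam neg D k => [|n IH] lam neg D k; first by case: k.
case: (unliftP ord_max k) => [k'|] ->; last exact: top_ge0.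
pose lam' := \row_(j < n) lam 0 (lift ord_max j).
have neg' : forall j, lam' 0 j < 0 by move=> j; rewrite mxE.
have D' : forall i j : 'I_n, i != j -> lam' 0 i != lam' 0 j.
  by move=> i j ij; rewrite !mxE; apply: D; rewrite (inj_eq (@lift_inj _ _)).
have U := vander_unit D.
have U' := vander_unit D'.
pose a := nu ord_max lam t.
have a0 : 0 <= a by exact: top_ge0.
pose w := \prod_(j < n) ('X - (lam' 0 j)%:P).
have sw : size w = n.+1.
  by rewrite /w size_prod_XsubC -[index_enum _]enumT size_enum_ord.
have lw : w`_n = 1.
  have := monicP (monic_prod_XsubC (index_enum 'I_n) xpredT (fun j => lam' 0 j)).
  by rewrite lead_coefE -/w sw.
pose P := rpoly (Defs.vbasis lam t).
pose Q := P - a *: w.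
have HQ := interp_unique U' (q := Q) (y := \row_j expR (lam' 0 j * t)).
have EQ : forall i : 'I_n, Q`_i = nu i lam' t.
  apply: HQ.
  - apply/leq_sizeP => i ni; rewrite /Q coefB coefZ.
    move: ni; rewrite leq_eqVlt => /orP [/eqP <-|ni].
      rewrite lw mulr1 /P.
      by rewrite (coef_rpoly_ord (Defs.vbasis lam t) ord_max) subrr.
    rewrite /P coef_rpoly_ge // nth_default ?mulr0 ?subr0 //.
    by rewrite sw.
  - move=> j; rewrite /Q hornerD hornerN hornerZ /w horner_prod.
    rewrite (bigD1 j) //= hornerXsubC subrr mul0r mulr0 subr0.
    by rewrite /P !mxE (nu_interp t U).
have -> : nu (lift ord_max k') lam t = P`_k'.
  rewrite /nu /P -(coef_rpoly_ord (Defs.vbasis lam t) (lift ord_max k')) /=.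
  by congr nth; rewrite /bump leqNgt ltn_ord.
have -> : P`_k' = Q`_k' + a * w`_k' by rewrite /Q coefB coefZ subrK.
rewrite EQ; apply: addr_ge0; first exact: IH.
by apply: mulr_ge0 => //; exact: prod_coef_ge0.
Qed.
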